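(* Let $C>0$. There exist $K,\varepsilon_0>0$ such that for all $0<\varepsilon<\varepsilon_0$, all $0<\zeta\le C\varepsilon^{3q-1}$ and all $s\ge0$, $$\inf\Big\{L(\nu)\ :\ \nu\in{\rm AC}([0,1],\mathbb{R}^2),\ \nu(0)=(0,-s),\ \nu(1)=(\varepsilon^q,\varepsilon),\ \nu([0,1])\subset D_\zeta\Big\}\ \ge\ L_{\rm SR}(\gamma_{s,\varepsilon})-K\zeta^{1-\frac1b}.$$
   Context: Fix an odd integer $b\geq5$, $q=b/2$. $L(\cdot)$ is the Euclidean length of plane curves. Let $P(x_1,x_2)=x_1^2-x_2^b$, and $\widetilde P(x_1,x_2)=P(x_1,x_2)$ if $x_2\ge0$, $\widetilde P(x_1,x_2)=x_1^2$ if $x_2<0$. For $\zeta>0$, $D_\zeta=\{x\in\mathbb{R}^2: x_1\ge0,\ \widetilde P(x)\le\zeta\}$. Let $\gamma(t)=(0,t,\tfrac{t^{2b+1}}{2b+1})$ for $t<0$ and $\gamma(t)=(t^q,t,0)$ for $t\ge0$, $\gamma_{s,\varepsilon}=\gamma|_{[-s,\varepsilon]}$; its sub-Riemannian length equals the Euclidean length of its projection to the first two coordinates, i.e. $L_{\rm SR}(\gamma_{s,\varepsilon})=s+\int_0^\varepsilon\sqrt{1+q^2t^{2q-2}}\,dt$. *)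

(* Defs.v *)
From Stdlib Require Import Reals.
From Coquelicot Require Import Coquelicot.
Open Scope R_scope.

Definition dist2 (x y : R * R) : R :=
  sqrt ((fst x - fst y) ^ 2 + (snd x - snd y) ^ 2).

Fixpoint sumn_R (n : nat) (f : nat -> R) : R :=
  match n with
  | O => 0
  | S m => sumn_R m f + f m
  end.

(* Absolute continuity of nu : [0,1] -> R^2 (classical epsilon-delta
   definition with finite families of non-overlapping subintervals). *)
Definition abs_cont01 (nu : R -> R * R) : Prop :=
  forall eps, 0 < eps -> exists delta, 0 < delta /\
    forall (n : nat) (a b : nat -> R),
      (forall i, (i < n)%nat -> 0 <= a i /\ a i <= b i /\ b i <= 1) ->
      (forall i, (S i < n)%nat -> b i <= a (S i)) ->
      sumn_R n (fun i => b i - a i) < delta ->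
      sumn_R n (fun i => dist2 (nu (b i)) (nu (a i))) < eps.

Definition inscribed_length (nu : R -> R * R) (l : R) : Prop :=
  exists (n : nat) (t : nat -> R),
    t O = 0 /\ t n = 1 /\ (forall i, (i < n)%nat -> t i <= t (S i)) /\
    l = sumn_R n (fun i => dist2 (nu (t (S i))) (nu (t i))).

Definition curve_length (nu : R -> R * R) : Rbar :=
  Lub_Rbar (inscribed_length nu).

Definition Pt (b : nat) (x : R * R) : R :=
  if Rle_dec 0 (snd x) then fst x ^ 2 - snd x ^ b else fst x ^ 2.

Definition Dz (b : nat) (zeta : R) (x : R * R) : Prop :=
  0 <= fst x /\ Pt b x <= zeta.

(* L_SR(gamma_{s,eps}) = s + int_0^eps sqrt(1 + q^2 t^(2q-2)) dt, q = b/2;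
   note 2q - 2 = b - 2 is a natural number. *)
Definition LSR (b : nat) (s eps : R) : R :=
  let q := INR b / 2 in
  s + RInt (fun t => sqrt (1 + q ^ 2 * t ^ (b - 2))) 0 eps.

(* Main.v *)
Require Import Defs.
From Stdlib Require Import Reals Lra Psatz Lia.
From Coquelicot Require Import Coquelicot.
Open Scope R_scope.

Lemma sumn_ext n f g : (forall i, (i < n)%nat -> f i = g i) -> sumn_R n f = sumn_R n g.
Proof. induction n; simpl; intros H; auto. rewrite IHn; [rewrite H|]; auto; intros; apply H; lia. Qed.

Lemma sumn_le n f g : (forall i, (i < n)%nat -> f i <= g i) -> sumn_R n f <= sumn_R n g.
Proof. induction n; simpl; intros H; [lra|]. assert (f n <= g n) by (apply H; lia).
 assert (sumn_R n f <= sumn_R n g) by (apply IHn; intros; apply H; lia). lra. Qed.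

Lemma sumn_plus n f g : sumn_R n (fun i => f i + g i) = sumn_R n f + sumn_R n g.
Proof. induction n; simpl; [lra|]. rewrite IHn; lra. Qed.

Lemma sumn_minus n f g : sumn_R n (fun i => f i - g i) = sumn_R n f - sumn_R n g.
Proof. induction n; simpl; [lra|]. rewrite IHn; lra. Qed.

Lemma sumn_scal n c f : sumn_R n (fun i => c * f i) = c * sumn_R n f.
Proof. induction n; simpl; [lra|]. rewrite IHn; lra. Qed.

Lemma sumn_tele n u : sumn_R n (fun i => u (S i) - u i) = u n - u O.
Proof. induction n; simpl; [lra|]. rewrite IHn; lra. Qed.

Lemma sumn_shift n f : sumn_R (S n) f = f O + sumn_R n (fun i => f (S i)).
Proof. induction n; simpl in *; [lra|]. rewrite IHn. lra. Qed.

Lemma pow_diff_le n s t : 0 <= s <= t -> t ^ S n - s ^ S n <= INR (S n) * t ^ n * (t - s).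
Proof.
  intros Hs. induction n.
  - simpl. lra.
  - replace (t ^ S (S n) - s ^ S (S n)) with (t * (t ^ S n - s ^ S n) + s ^ S n * (t - s)) by (simpl; ring).
    assert (0 <= s ^ S n <= t ^ S n) by (split; [apply pow_le; lra| apply pow_incr; lra]).
    rewrite S_INR. assert (0 <= t - s) by lra.
    assert (t * (t ^ S n - s ^ S n) <= t * (INR (S n) * t ^ n * (t - s))) by (apply Rmult_le_compat_l; lra).
    replace (t * (INR (S n) * t ^ n * (t - s))) with (INR (S n) * t ^ S n * (t - s)) in H1 by (simpl; ring).
    assert (s ^ S n * (t - s) <= t ^ S n * (t-s)) by (apply Rmult_le_compat_r; lra).
    simpl in *. nra.
Qed.

Lemma secant e t T : 0 <= t <= T ->
  INR (e + 2) * t ^ e * (T ^ 2 - t ^ 2) <= 2 * (T ^ (e + 2) - t ^ (e + 2)) <=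
  INR (e + 2) * T ^ e * (T ^ 2 - t ^ 2).
Proof.
  intros Ht. enough (forall e, (INR (e + 2) * t ^ e * (T ^ 2 - t ^ 2) <= 2 * (T ^ (e + 2) - t ^ (e + 2)) <=
  INR (e + 2) * T ^ e * (T ^ 2 - t ^ 2)) /\ (INR (S e + 2) * t ^ S e * (T ^ 2 - t ^ 2) <= 2 * (T ^ (S e + 2) - t ^ (S e + 2)) <=
  INR (S e + 2) * T ^ S e * (T ^ 2 - t ^ 2))) by (apply H).
  clear e. intro e0.
  assert (Hd : 0 <= T^2 - t^2) by nra.
  induction e0 as [|e IH].
  - simpl. split. { split; nra. }
    assert (0 <= (T-t)*(T-t)*(2*T+t)) by (apply Rmult_le_pos; [nra|lra]).
    assert (0 <= (T-t)*(T-t)*(T+2*t)) by (apply Rmult_le_pos; [nra|lra]).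
    split; nra.
  - destruct IH as [IH0 IH]. split; [exact IH|].
    destruct IH0 as [IH1 IH2].
    replace (S (S e) + 2)%nat with (e + 2 + 2)%nat by lia.
    replace (S (S e)) with (e + 2)%nat by lia.
    rewrite !(pow_add _ (e+2) 2). rewrite !(plus_INR (e+2) 2). rewrite (pow_add t e 2), (pow_add T e 2).
    assert (Hte: 0 <= t ^ e <= T ^ e) by (split; [apply pow_le; lra | apply pow_incr; lra]).
    assert (H2: 0 <= t ^ 2 <= T ^ 2) by (split; [apply pow_le; lra | apply pow_incr; lra]).
    rewrite (pow_add t e 2), (pow_add T e 2) in IH1, IH2.
    set (a := t ^ e) in *. set (A := T ^ e) in *. set (u := t^2) in *. set (U := T^2) in *.
    set (n := INR (e + 2)) in *. replace (INR 2) with 2 by (simpl; lra).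
    assert (0 <= n) by (apply pos_INR).
    split.
    + assert (U * (n * a * (U - u)) <= U * (2 * (A * U - a * u))) by (apply Rmult_le_compat_l; lra).
      assert (a*u <= a * U) by (apply Rmult_le_compat_l; lra).
      assert (u * (n * a * (U - u)) <= U * (n * a * (U - u))) by (apply Rmult_le_compat_r; nra).
      replace ((n + 2) * (a * u) * (U - u)) with (u*(n*a*(U-u)) + 2*(a*u*(U-u))) by ring.
      replace (2 * (A * U * U - a * u * u)) with (U*(2*(A*U - a*u)) + 2*(a*u*(U-u))) by ring. lra.
    + assert (U * (2 * (A * U - a * u)) <= U * (n * A * (U - u))) by (apply Rmult_le_compat_l; lra).
      assert (a*u <= A * U) by (apply Rmult_le_compat; lra).
      assert (a * u * (U - u) <= A * U * (U-u)) by (apply Rmult_le_compat_r; lra).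
      replace ((n + 2) * (A * U) * (U - u)) with (U*(n*A*(U-u)) + 2*(A*U*(U-u))) by ring.
      replace (2 * (A * U * U - a * u * u)) with (U*(2*(A*U - a*u)) + 2*(a*u*(U-u))) by ring. lra.
Qed.

Lemma cs X U V : 0 < U ->
  sqrt (U^2 + V^2) + V / sqrt (U^2+V^2) * (X - V) <= sqrt (X^2 + U^2).
Proof.
  intros HU.
  assert (Hl: 0 < sqrt (U^2+V^2)) by (apply sqrt_lt_R0; nra).
  set (l := sqrt (U^2+V^2)) in *.
  assert (Hl2: l * l = U^2 + V^2) by (apply sqrt_sqrt; nra).
  replace (l + V / l * (X - V)) with ((l*l + V * X - V*V) / l) by (field; lra).
  rewrite Hl2. replace (U ^ 2 + V ^ 2 + V * X - V * V) with (U^2 + V*X) by ring.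
  apply (Rmult_le_reg_r l); [lra|]. unfold Rdiv. rewrite Rmult_assoc, Rinv_l, Rmult_1_r by lra.
  destruct (Rle_dec (U^2 + V*X) 0) as [Hn|Hp].
  { assert (0 <= sqrt (X^2+U^2) * l) by (apply Rmult_le_pos; [apply sqrt_pos|lra]). lra. }
  rewrite <- (sqrt_square (U^2+V*X)) by lra.
  unfold l. rewrite <- sqrt_mult by nra.
  apply sqrt_le_1_alt. assert (0 <= U^2*(X-V)^2) by (apply Rmult_le_pos; apply pow2_ge_0). nra.
Qed.

Lemma abel m (sg r : nat -> R) :
  (forall k, (k <= m)%nat -> 0 <= sg k) -> (forall k, (k < m)%nat -> sg k <= sg (S k)) ->
  (forall k, (k <= S m)%nat -> 0 <= r k) ->
  0 <= sumn_R (S m) (fun k => sg k * (r k - r (S k))) + sg m * r (S m).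
Proof.
  induction m; intros H1 H2 H3.
  - simpl. assert (0 <= sg O) by (apply H1; lia). assert (0 <= r O) by (apply H3; lia). nra.
  - assert (IH : 0 <= sumn_R (S m) (fun k => sg k * (r k - r (S k))) + sg m * r (S m)).
    { apply IHm; intros; [apply H1|apply H2|apply H3]; lia. }
    change (sumn_R (S (S m)) (fun k => sg k * (r k - r (S k)))) with
      (sumn_R (S m) (fun k => sg k * (r k - r (S k))) + sg (S m) * (r (S m) - r (S (S m)))).
    assert (sg m <= sg (S m)) by (apply H2; lia). assert (0 <= r (S m)) by (apply H3; lia). nra.
Qed.

Definition Sx (b : nat) (r x : R) := sqrt ((x^b)^2 + (r^b)^2).
Definition hx (b : nat) (r x : R) := Sx b r x - x ^ b.

Lemma sq_facts X P : 0 <= X -> 0 < P ->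
  X <= sqrt (X^2+P^2) /\ P <= sqrt (X^2+P^2) /\ sqrt (X^2+P^2) * sqrt (X^2+P^2) = X^2+P^2.
Proof.
  intros. assert (Hs: sqrt (X^2+P^2) * sqrt (X^2+P^2) = X^2+P^2) by (apply sqrt_sqrt; nra).
  assert (0 <= sqrt (X^2+P^2)) by apply sqrt_pos. split; [|split]; auto; nra.
Qed.

Lemma hx_mul b r x : 0 <= x -> 0 < r -> hx b r x * (Sx b r x + x^b) = (r^b)^2.
Proof.
  intros. unfold hx, Sx. assert (0 <= x^b) by (apply pow_le; lra). assert (0 < r^b) by (apply pow_lt; lra).
  destruct (sq_facts (x^b) (r^b)) as [? [? ?]]; auto. nra.
Qed.

Lemma hx_nonneg b r x : 0 <= x -> 0 < r -> 0 <= hx b r x <= r^b.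
Proof.
  intros. unfold hx, Sx. assert (0 <= x^b) by (apply pow_le; lra). assert (0 < r^b) by (apply pow_lt; lra).
  destruct (sq_facts (x^b) (r^b)) as [? [? ?]]; auto. split; [lra|].
  set (S := sqrt ((x ^ b) ^ 2 + (r ^ b) ^ 2)) in *. nra.
Qed.

Lemma hx_decr b r s t : 0 <= s <= t -> 0 < r -> hx b r t <= hx b r s.
Proof.
  intros. assert (Hs := hx_mul b r s ltac:(lra) H0). assert (Ht := hx_mul b r t ltac:(lra) H0).
  assert (0 <= s^b <= t^b) by (split; [apply pow_le|apply pow_incr]; lra).
  assert (Sx b r s <= Sx b r t).
  { unfold Sx. apply sqrt_le_1_alt. assert ((s^b)^2 <= (t^b)^2) by (apply pow_incr; lra). lra. }
  assert (0 < r^b) by (apply pow_lt; lra).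
  assert (Hsp: 0 < Sx b r s + s^b).
  { unfold Sx. destruct (sq_facts (s^b) (r^b)) as [? [? ?]]; lra. }
  destruct (hx_nonneg b r s) as [? ?]; try lra. destruct (hx_nonneg b r t) as [? ?]; try lra.
  nra.
Qed.

Lemma hx_lip b r s t : 0 <= s <= t -> 0 < r -> hx b r s - hx b r t <= t^b - s^b.
Proof.
  intros. unfold hx. assert (Sx b r s <= Sx b r t).
  { unfold Sx. apply sqrt_le_1_alt. assert (0 <= s^b <= t^b) by (split; [apply pow_le|apply pow_incr]; lra).
    assert ((s^b)^2 <= (t^b)^2) by (apply pow_incr; lra). lra. }
  lra.
Qed.

Lemma pow_S_bound e r x : 0 <= x -> 0 < r -> x^e * (x^2 + r^2) <= 2 * Sx (e+2) r x.
Proof.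
  intros. unfold Sx. assert (0 < r^(e+2)) by (apply pow_lt; lra).
  assert (0 <= x^(e+2)) by (apply pow_le; lra).
  destruct (sq_facts (x^(e+2)) (r^(e+2))) as [? [? ?]]; auto.
  rewrite !pow_add in *.
  destruct (Rle_dec r x).
  - assert (r^2 <= x^2) by (apply pow_incr; lra). assert (0 <= x^e) by (apply pow_le; lra). nra.
  - assert (x^e <= r^e) by (apply pow_incr; lra). assert (x^2 <= r^2) by (apply pow_incr; lra).
    assert (0 <= x^e) by (apply pow_le; lra). assert (0<= x^2) by (apply pow_le; lra). nra.
Qed.

Lemma Vbound e r s t : 0 <= s <= t -> 0 < r ->
  s^e * (hx (e+2) r s - hx (e+2) r t) <=
  8 * INR (e+2) * (r^(e+2))^2 * (1/(s^2+r^2) - 1/(t^2+r^2)).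
Proof.
  intros Hst Hr. set (b := (e+2)%nat).
  set (P := r^b). assert (HP: 0 < P) by (apply pow_lt; lra).
  assert (Hsb: 0 <= s^b <= t^b) by (split; [apply pow_le|apply pow_incr]; lra).
  assert (Hse: 0 <= s^e <= t^e) by (split; [apply pow_le|apply pow_incr]; lra).
  destruct (sq_facts (s^b) P) as [Hs1 [Hs2 Hs3]]; try lra.
  destruct (sq_facts (t^b) P) as [Ht1 [Ht2 Ht3]]; try lra.
  assert (Hhs := hx_nonneg b r s ltac:(lra) Hr). assert (Hht := hx_nonneg b r t ltac:(lra) Hr).
  assert (Hdec := hx_decr b r s t Hst Hr).
  assert (Hms := hx_mul b r s ltac:(lra) Hr).
  unfold hx, Sx in *. change (r^b) with P in Hhs, Hht, Hdec, Hms |- *.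
  set (Ss := sqrt ((s ^ b) ^ 2 + P ^ 2)) in *. set (St := sqrt ((t ^ b) ^ 2 + P ^ 2)) in *.
  set (hs := Ss - s^b) in *. set (ht := St - t^b) in *.
  assert (E1: (hs - ht) * (St + Ss) = (t^b - s^b) * (ht + hs)).
  { unfold hs, ht. nra. }
  assert (E2: (hs - ht) * St <= 2 * hs * (t^b - s^b)).
  { assert ((hs - ht) * Ss >= 0) by nra. assert ((t^b - s^b) * (ht + hs) <= (t^b - s^b) * (2*hs)) by (apply Rmult_le_compat_l; lra). nra. }
  assert (E3: t^b - s^b <= INR b * t^e * (t^2 - s^2)).
  { assert (H := pow_diff_le (S e) s t Hst). replace (S (S e)) with b in H by (unfold b; lia).
    replace (INR (S (S e))) with (INR b) in H by (f_equal; unfold b; lia).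
    assert (t^(S e) * (t - s) <= t^e * (t^2 - s^2)).
    { replace (t^(S e)) with (t^e * t) by (simpl; ring). assert (t*(t-s) <= t^2 - s^2) by nra. nra. }
    assert (0 <= INR b) by apply pos_INR. nra. }
  assert (Hb: 0 <= INR b) by apply pos_INR.
  destruct (Req_dec s t) as [Heq|Hne].
  { subst t. replace (hs - ht) with 0 by (unfold hs, ht, Ss, St; ring). replace (1/(s^2+r^2) - 1/(s^2+r^2)) with 0 by ring.
    nra. }
  assert (Htp: 0 < t) by lra. assert (HSt: 0 < St) by lra.
  assert (E4: t^e * (t^2 + r^2) <= 2 * St) by (apply (pow_S_bound e r t); lra).
  assert (E5: s^e * (s^2 + r^2) <= 2 * Ss) by (apply (pow_S_bound e r s); lra).
  assert (Hd: 0 <= t^2 - s^2) by nra.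
  assert (E6: (hs - ht) * St * (t^2+r^2) <= 4 * INR b * hs * (t^2-s^2) * St).
  { assert ((hs - ht) * St * (t^2+r^2) <= 2 * hs * (INR b * t^e * (t^2 - s^2)) * (t^2+r^2)).
    { apply Rmult_le_compat_r; [nra|]. assert (0 <= 2*hs) by lra.
      assert (2 * hs * (t^b - s^b) <= 2 * hs * (INR b * t ^ e * (t ^ 2 - s ^ 2))) by (apply Rmult_le_compat_l; lra). lra. }
    assert (0 <= 2 * hs * INR b * (t^2-s^2)) by (repeat apply Rmult_le_pos; lra).
    nra. }
  assert (E7: (hs - ht) * (t^2+r^2) <= 4 * INR b * hs * (t^2-s^2)).
  { apply (Rmult_le_reg_r St); [lra|]. nra. }
  assert (E8: s^e * hs * (s^2+r^2) <= 2 * P^2).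
  { assert (s^e * (s^2 + r^2) * hs <= 2 * Ss * hs) by (apply Rmult_le_compat_r; lra).
    assert (2 * Ss * hs <= 2 * (Ss + s^b) * hs) by (apply Rmult_le_compat_r; lra). nra. }
  assert (Hs2p: 0 < s^2 + r^2) by nra. assert (Ht2': 0 < t^2 + r^2) by nra.
  replace (1 / (s ^ 2 + r ^ 2) - 1 / (t ^ 2 + r ^ 2)) with ((t^2 - s^2) / ((s^2+r^2)*(t^2+r^2))) by (field; lra).
  apply (Rmult_le_reg_r ((s^2+r^2)*(t^2+r^2))); [nra|].
  unfold Rdiv. replace (8 * INR b * P ^ 2 * ((t ^ 2 - s ^ 2) * / ((s ^ 2 + r ^ 2) * (t ^ 2 + r ^ 2))) *
   ((s ^ 2 + r ^ 2) * (t ^ 2 + r ^ 2))) with (8 * INR b * P ^ 2 * (t ^ 2 - s ^ 2)) by (field; lra).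
  assert (s^e * ((hs - ht) * (t^2+r^2)) <= s^e * (4 * INR b * hs * (t^2-s^2))) by (apply Rmult_le_compat_l; lra).
  assert (0 <= 4 * INR b * (t^2-s^2)) by nra.
  assert (4 * INR b * (t^2-s^2) * (s^e * hs * (s^2+r^2)) <= 4 * INR b * (t^2-s^2) * (2*P^2)) by (apply Rmult_le_compat_l; lra).
  assert (s^e * ((hs - ht) * (t^2+r^2)) * (s^2+r^2) <= s^e * (4 * INR b * hs * (t^2-s^2)) * (s^2+r^2)) by (apply Rmult_le_compat_r; lra).
  replace (s ^ e * (hs - ht) * ((s ^ 2 + r ^ 2) * (t ^ 2 + r ^ 2))) with (s^e * ((hs - ht) * (t^2+r^2)) * (s^2+r^2)) by ring.
  replace (8 * INR b * P ^ 2 * (t ^ 2 - s ^ 2)) with (4 * INR b * (t^2-s^2) * (2*P^2)) by ring.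
  replace (s ^ e * (4 * INR b * hs * (t ^ 2 - s ^ 2)) * (s ^ 2 + r ^ 2)) with (4 * INR b * (t^2-s^2) * (s^e * hs * (s^2+r^2))) in * by ring.
  lra.
Qed.
Lemma RInt_upper (w : R -> R) (y : nat -> R) n :
  (forall x, 0 <= x -> continuous w x) ->
  (forall x x', 0 <= x <= x' -> w x <= w x') ->
  (forall k, (k <= n)%nat -> 0 <= y k) ->
  (forall k, (k < n)%nat -> y k <= y (S k)) ->
  RInt w (y O) (y n) <= sumn_R n (fun k => (y (S k) - y k) * w (y (S k))).
Proof.
  intros Hc Hm Hy Hinc.
  assert (Hex: forall a c, 0 <= a -> 0 <= c -> ex_RInt w a c).
  { intros a c Ha Hc'. apply (@ex_RInt_continuous R_CompleteNormedModule). intros z Hz. apply Hc.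
    assert (0 <= Rmin a c) by (apply Rmin_glb; lra). lra. }
  induction n.
  - simpl. rewrite RInt_point. unfold zero; simpl. lra.
  - simpl. rewrite <- (RInt_Chasles w (y O) (y n) (y (S n))).
    2: apply Hex; apply Hy; lia. 2: apply Hex; apply Hy; lia.
    assert (IH: RInt w (y 0%nat) (y n) <= sumn_R n (fun k => (y (S k) - y k) * w (y (S k)))).
    { apply IHn; intros; [apply Hy|apply Hinc]; lia. }
    assert (H2: RInt w (y n) (y (S n)) <= RInt (fun _ => w (y (S n))) (y n) (y (S n))).
    { apply RInt_le. apply Hinc; lia. apply Hex; apply Hy; lia. apply ex_RInt_const.
      intros x Hx. apply Hm. assert (0 <= y n) by (apply Hy; lia). lra. }
    rewrite RInt_const in H2. unfold scal in H2; simpl in H2. unfold mult in H2; simpl in H2.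
    unfold plus; simpl. lra.
Qed.

Definition phi d := d / sqrt (1 + d^2).

Lemma phi_props d : 0 <= d -> 0 <= phi d <= d.
Proof.
  intros. unfold phi. assert (H1: 1 <= sqrt (1 + d^2)).
  { rewrite <- sqrt_1 at 1. apply sqrt_le_1_alt. nra. }
  split. apply Rdiv_le_0_compat; lra.
  apply (Rmult_le_reg_r (sqrt (1+d^2))); [lra|]. unfold Rdiv. rewrite Rmult_assoc, Rinv_l by lra. rewrite Rmult_1_r. assert (d * 1 <= d * sqrt (1+d^2)) by (apply Rmult_le_compat_l; lra). lra.
Qed.

Lemma phi_mono d d' : 0 <= d <= d' -> phi d <= phi d'.
Proof.
  intros. unfold phi.
  assert (H1: 0 < sqrt (1 + d^2)) by (apply sqrt_lt_R0; nra).
  assert (H2: 0 < sqrt (1 + d'^2)) by (apply sqrt_lt_R0; nra).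
  assert (E1: sqrt (1+d^2) * sqrt (1+d^2) = 1 + d^2) by (apply sqrt_sqrt; nra).
  assert (E2: sqrt (1+d'^2) * sqrt (1+d'^2) = 1 + d'^2) by (apply sqrt_sqrt; nra).
  apply (Rmult_le_reg_r (sqrt (1+d^2) * sqrt (1+d'^2))); [nra|].
  replace (d / sqrt (1 + d ^ 2) * (sqrt (1 + d ^ 2) * sqrt (1 + d' ^ 2))) with (d * sqrt (1 + d'^2)) by (field; lra).
  replace (d' / sqrt (1 + d' ^ 2) * (sqrt (1 + d ^ 2) * sqrt (1 + d' ^ 2))) with (d' * sqrt (1 + d^2)) by (field; lra).
  assert (0 <= d * sqrt (1 + d'^2)) by nra. assert (0 <= d' * sqrt (1 + d^2)) by nra.
  apply Rsqr_incr_0_var; [|lra]. unfold Rsqr.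
  replace (d * sqrt (1 + d' ^ 2) * (d * sqrt (1 + d' ^ 2))) with (d^2 * (sqrt (1+d'^2) * sqrt (1+d'^2))) by ring. rewrite E2.
  replace (d' * sqrt (1 + d ^ 2) * (d' * sqrt (1 + d ^ 2))) with (d'^2 * (sqrt (1+d^2) * sqrt (1+d^2))) by ring. rewrite E1.
  assert (d^2 <= d'^2) by (apply pow_incr; lra). nra.
Qed.

Lemma chord U d : 0 < U -> sqrt (U^2 + (d*U)^2) = U * sqrt (1 + d^2) /\
   (d*U) / sqrt (U^2 + (d*U)^2) = phi d.
Proof.
  intros. assert (E: sqrt (U^2 + (d*U)^2) = U * sqrt (1 + d^2)).
  { replace (U^2 + (d*U)^2) with (U^2 * (1 + d^2)) by ring. rewrite sqrt_mult by nra.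
    rewrite sqrt_pow2 by lra. auto. }
  split; auto. rewrite E. unfold phi. assert (0 < sqrt (1 + d^2)) by (apply sqrt_lt_R0; nra). field; lra.
Qed.

Lemma core (e N : nat) (th rho : R) (a : nat -> R) :
  (1 <= e)%nat -> (1 <= N)%nat -> 0 < th -> 0 < rho ->
  (forall k, (k <= N)%nat -> 0 <= a k <= Sx (e+2) rho (INR k * (th / INR N))) ->
  a N = th ^ (e+2) ->
  RInt (fun y => sqrt (1 + (INR (e+2)/2)^2 * y^e)) 0 (th^2)
   - (2*th*(th/INR N)*(sqrt (1 + (INR (e+2)/2)^2 * (th^2)^e) - sqrt (1 + (INR (e+2)/2)^2 * 0^e))
      + INR (e+2)/2 * (8 * INR (e+2) * (rho^(e+2))^2 / rho^2)
      + INR (e+2)/2 * INR (e+2) * th^(e+1) * (th/INR N) * th^e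
      + INR (e+2)/2 * th^e * ((rho^(e+2))^2 / th^(e+2)))
  <= sumn_R N (fun k => sqrt ((a (S k) - a k)^2 + ((INR (S k) * (th/INR N))^2 - (INR k * (th/INR N))^2)^2)).
Proof.
  intros He HN Hth Hr Ha HaN.
  set (b := (e+2)%nat) in *. set (q := INR b / 2) in *. set (tau := th / INR N) in *.
  set (w := fun y => sqrt (1 + q^2 * y^e)).
  set (t := fun k => INR k * tau).
  assert (HN' : 0 < INR N) by (apply lt_0_INR; lia).
  assert (Htau : 0 < tau) by (unfold tau; apply Rdiv_lt_0_compat; lra).
  assert (Hb : INR b = INR e + 2) by (unfold b; rewrite plus_INR; simpl; lra).
  assert (He1 : 1 <= INR e) by (apply (le_INR 1); lia).
  assert (Hq : 0 < q) by (unfold q; lra).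
  assert (Ht0 : forall k, 0 <= t k) by (intros; unfold t; apply Rmult_le_pos; [apply pos_INR|lra]).
  assert (HtS : forall k, t (S k) = t k + tau) by (intros; unfold t; rewrite S_INR; ring).
  assert (HtN : t N = th) by (unfold t, tau; field; lra).
  assert (Htz : t O = 0) by (unfold t; simpl; ring).
  assert (Htle : forall k, (k <= N)%nat -> t k <= th).
  { intros k Hk. rewrite <- HtN. unfold t. apply Rmult_le_compat_r; [lra|]. apply le_INR; auto. }
  set (dy := fun k => t (S k)^2 - t k^2).
  assert (Hdy : forall k, 0 < dy k) by (intros; unfold dy; rewrite HtS; specialize (Ht0 k); nra).
  set (d := fun k => (t (S k)^b - t k^b) / dy k).
  assert (Hd : forall k, q * t k^e <= d k <= q * t (S k)^e).
  { intros k. assert (Hs := secant e (t k) (t (S k)) ltac:(rewrite HtS; specialize (Ht0 k); lra)).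
    fold b in Hs. specialize (Hdy k). unfold d, q. fold (dy k) in Hs. unfold dy in *.
    split; [apply (Rmult_le_reg_r (dy k))|apply (Rmult_le_reg_r (dy k))]; unfold dy; try lra;
      field_simplify; try lra. }
  assert (Hd0 : forall k, 0 <= q * t k ^ e) by (intros; apply Rmult_le_pos; [lra|apply pow_le; auto]).
  set (sg := fun k => phi (d k)).
  assert (Hsg : forall k, 0 <= sg k <= q * t (S k)^e).
  { intros k. destruct (phi_props (d k)) as [? ?]. specialize (Hd k); specialize (Hd0 k); lra.
    unfold sg; split; [auto|]. specialize (Hd k); lra. }
  assert (Hsgm : forall k, sg k <= sg (S k)).
  { intros k. unfold sg. apply phi_mono. pose proof (Hd k); pose proof (Hd (S k)); pose proof (Hd0 k). lra. }
  set (h := fun k => hx b rho (t k)).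
  set (E := fun k => a k - t k ^ b).
  set (r := fun k => h k - E k).
  assert (Hrk : forall k, (k <= N)%nat -> 0 <= r k).
  { intros k Hk. specialize (Ha k Hk). unfold r, h, E, hx. fold (t k) in Ha. lra. }
  assert (HrN : r N = h N) by (unfold r, E; rewrite HaN, HtN; ring).
  assert (Hpt : forall k, (k < N)%nat ->
    dy k * w (t (S k)^2) - dy k * (w (t (S k)^2) - w (t k^2)) - sg k * (h k - h (S k)) + sg k * (r k - r (S k))
    <= sqrt ((a (S k) - a k)^2 + (dy k)^2)).
  { intros k Hk. pose proof (Hdy k) as Hdyk.
    pose proof (cs (a (S k) - a k) (dy k) (d k * dy k) Hdyk) as Hcs.
    destruct (chord (dy k) (d k) Hdyk) as [C1 C2].
    replace ((d k * dy k)^2) with ((d k * dy k)^2) in Hcs by ring.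
    rewrite C2, C1 in Hcs.
    assert (Hdd : d k * dy k = t (S k)^b - t k^b) by (unfold d; field; lra).
    rewrite Hdd in Hcs.
    assert (HE : a (S k) - a k - (t (S k) ^ b - t k ^ b) = (h (S k) - h k) + (r k - r (S k))) by (unfold r, E; ring).
    rewrite HE in Hcs.
    assert (Hw : w (t k ^2) <= sqrt (1 + d k ^2)).
    { unfold w. apply sqrt_le_1_alt. replace ((t k^2)^e) with ((t k^e)^2) by (rewrite <- !pow_mult; f_equal; lia).
      pose proof (Hd k). pose proof (Hd0 k). assert ((q * t k^e)^2 <= d k^2) by (apply pow_incr; lra).
      replace (q^2 * (t k ^e)^2) with ((q * t k^e)^2) by ring. lra. }
    assert (dy k * w (t k ^ 2) <= dy k * sqrt (1 + d k ^ 2)) by (apply Rmult_le_compat_l; lra).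
    unfold sg. lra. }
  assert (Hwm : forall x x', 0 <= x <= x' -> w x <= w x').
  { intros x x' Hx. unfold w. apply sqrt_le_1_alt. assert (x^e <= x'^e) by (apply pow_incr; lra).
    assert (0 <= q^2) by nra. nra. }
  assert (Hwc : forall x, 0 <= x -> continuous w x).
  { intros x Hx. apply (@ex_derive_continuous R_AbsRing R_NormedModule). unfold w. auto_derive.
    assert (0 <= x^e) by (apply pow_le; lra). nra. }
  assert (Hdyle : forall k, (k < N)%nat -> dy k <= 2 * th * tau).
  { intros k Hk. unfold dy. rewrite HtS. pose proof (Ht0 k). assert (t (S k) <= th) by (apply Htle; lia).
    rewrite HtS in H0. nra. }
  assert (SA : RInt w 0 (th^2) <= sumn_R N (fun k => dy k * w (t (S k)^2))).
  { pose proof (RInt_upper w (fun k => t k ^2) N Hwc Hwm) as HR.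
    cbv beta in HR. rewrite Htz, HtN in HR. replace (0^2) with 0 in HR by ring.
    apply HR.
    - intros; apply pow_le; auto.
    - intros k Hk. rewrite HtS. pose proof (Ht0 k). nra. }
  assert (SB : sumn_R N (fun k => dy k * (w (t (S k)^2) - w (t k^2))) <= 2 * th * tau * (w (th^2) - w 0)).
  { apply Rle_trans with (sumn_R N (fun k => 2 * th * tau * (w (t (S k)^2) - w (t k^2)))).
    - apply sumn_le. intros k Hk. apply Rmult_le_compat_r.
      + assert (w (t k^2) <= w (t (S k)^2)); [|lra]. apply Hwm. rewrite HtS. pose proof (Ht0 k). split; [apply pow_le; lra|]. nra.
      + apply Hdyle; auto.
    - rewrite sumn_scal. rewrite (sumn_tele N (fun k => w (t k ^2))). rewrite HtN, Htz.
      replace (0^2) with 0 by ring. lra. }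
  set (P := rho ^ b).
  set (W := fun x => - (8 * INR b * P^2) * (1 / (x^2 + rho^2))).
  set (B := INR b * th^(e+1) * tau).
  assert (Hhd : forall k, (k < N)%nat -> 0 <= h k - h (S k) <= B).
  { intros k Hk. pose proof (Ht0 k). assert (t (S k) <= th) by (apply Htle; lia). rewrite HtS in H0.
    split.
    - unfold h. pose proof (hx_decr b rho (t k) (t (S k))). rewrite HtS in *. assert (hx b rho (t k + tau) <= hx b rho (t k)) by (apply H1; lra; lra). lra.
    - unfold h. pose proof (hx_lip b rho (t k) (t (S k))). rewrite HtS in *.
      assert (hx b rho (t k) - hx b rho (t k + tau) <= (t k + tau) ^ b - t k ^ b) by (apply H1; lra).
      pose proof (pow_diff_le (S e) (t k) (t k + tau) ltac:(lra)).
      replace (S (S e)) with b in H3 by (unfold b; lia). replace (INR (S (S e))) with (INR b) in H3 by (f_equal; unfold b; lia).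
      assert ((t k + tau)^(S e) <= th^(e+1)) by (replace (e+1)%nat with (S e) by lia; apply pow_incr; lra).
      unfold B. assert (0 <= INR b) by apply pos_INR.
      replace (t k + tau - t k) with tau in H3 by ring.
      assert (INR b * (t k + tau) ^ S e * tau <= INR b * th^(e+1) * tau); [|lra].
      apply Rmult_le_compat_r; [lra|]. apply Rmult_le_compat_l; lra. }
  assert (SC : sumn_R N (fun k => sg k * (h k - h (S k))) <= q * (8 * INR b * P^2 / rho^2) + q * B * th^e).
  { apply Rle_trans with (sumn_R N (fun k => q * (W (t (S k)) - W (t k)) + q * B * (t (S k)^e - t k^e))).
    - apply sumn_le. intros k Hk. pose proof (Hhd k Hk). pose proof (Hsg k).
      assert (HV := Vbound e rho (t k) (t (S k)) ltac:(rewrite HtS; pose proof (Ht0 k); lra) Hr).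
      fold b in HV. fold P in HV. change (hx b rho (t k)) with (h k) in HV. change (hx b rho (t (S k))) with (h (S k)) in HV.
      assert (HW : W (t (S k)) - W (t k) = 8 * INR b * P ^ 2 * (1 / (t k ^ 2 + rho ^ 2) - 1 / (t (S k) ^ 2 + rho ^ 2))) by (unfold W; ring).
      assert (Hte : 0 <= t k ^ e <= t (S k)^e) by (rewrite HtS; pose proof (Ht0 k); split; [apply pow_le|apply pow_incr]; lra).
      assert (sg k * (h k - h (S k)) <= q * t (S k)^e * (h k - h (S k))) by (apply Rmult_le_compat_r; lra).
      assert (q * (t (S k)^e - t k^e) * (h k - h (S k)) <= q * (t (S k)^e - t k^e) * B).
      { apply Rmult_le_compat_l; [|lra]. apply Rmult_le_pos; lra. }
      assert (q * (t k^e * (h k - h (S k))) <= q * (W (t (S k)) - W (t k))) by (apply Rmult_le_compat_l; lra).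
      nra.
    - rewrite sumn_plus, !sumn_scal. rewrite (sumn_tele N (fun k => W (t k))), (sumn_tele N (fun k => t k ^e)).
      rewrite HtN, Htz. rewrite pow_i by lia.
      assert (W th - W 0 <= 8 * INR b * P ^ 2 / rho ^ 2).
      { unfold W. assert (0 < rho^2) by nra. assert (0 < th^2 + rho^2) by nra.
        assert (0 <= 8 * INR b * P^2) by (assert (0 <= INR b) by apply pos_INR; nra).
        assert (0 <= 1 / (th^2+rho^2)) by (apply Rlt_le, Rdiv_lt_0_compat; lra).
        replace (0^2 + rho^2) with (rho^2) by ring. unfold Rdiv. nra. }
      assert (q * (W th - W 0) <= q * (8 * INR b * P ^ 2 / rho ^ 2)) by (apply Rmult_le_compat_l; lra). lra. }
  assert (SD : - (q * th^e * (P^2 / th^b)) <= sumn_R N (fun k => sg k * (r k - r (S k)))).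
  { destruct N as [|m]; [lia|].
    pose proof (abel m sg r) as HA.
    assert (HA' : 0 <= sumn_R (S m) (fun k => sg k * (r k - r (S k))) + sg m * r (S m)).
    { apply HA; intros; [apply Hsg | apply Hsgm | apply Hrk; lia]. }
    rewrite HrN in HA'.
    assert (Hsgm' : sg m <= q * th^e) by (rewrite <- HtN; apply Hsg).
    assert (Hthb : 0 < th^b) by (apply pow_lt; lra).
    assert (HhN : 0 <= h (S m) <= P^2 / th^b).
    { unfold h. rewrite HtN. pose proof (hx_mul b rho th ltac:(lra) Hr). pose proof (hx_nonneg b rho th ltac:(lra) Hr).
      assert (0 <= Sx b rho th) by (unfold Sx; apply sqrt_pos). fold P in H, H0.
      split; [lra|]. apply (Rmult_le_reg_r (th^b)); [lra|]. unfold Rdiv. rewrite Rmult_assoc, Rinv_l by lra. nra. }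
    assert (0 <= sg m) by apply Hsg.
    assert (sg m * h (S m) <= q * th^e * (P^2/th^b)) by (apply Rmult_le_compat; lra).
    lra. }
  assert (HBq : q * B * th^e = q * INR b * th^(e+1) * tau * th^e) by (unfold B; ring).
  apply Rle_trans with (sumn_R N (fun k => dy k * w (t (S k)^2) - dy k * (w (t (S k)^2) - w (t k^2)) - sg k * (h k - h (S k)) + sg k * (r k - r (S k)))).
  - rewrite sumn_plus, !sumn_minus. change (sqrt (1 + q ^ 2 * (th^2)^e)) with (w (th^2)). change (sqrt (1 + q^2 * 0^e)) with (w 0).
    unfold Rdiv in *. lra.
  - apply sumn_le. intros k Hk. exact (Hpt k Hk).
Qed.

Definition clamp (x : R) := Rmax 0 (Rmin 1 x).

Lemma clamp_in x : 0 <= clamp x <= 1.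
Proof. unfold clamp, Rmax, Rmin. repeat destruct Rle_dec; lra. Qed.

Lemma clamp_id x : 0 <= x <= 1 -> clamp x = x.
Proof. intros. unfold clamp, Rmax, Rmin. repeat destruct Rle_dec; lra. Qed.

Lemma clamp_lip x y : Rabs (clamp x - clamp y) <= Rabs (x - y).
Proof. unfold clamp, Rmax, Rmin. repeat destruct Rle_dec; unfold Rabs; repeat destruct Rcase_abs; lra. Qed.

Lemma dist2_snd x y : Rabs (snd x - snd y) <= dist2 x y.
Proof.
  unfold dist2. rewrite <- sqrt_Rsqr_abs. apply sqrt_le_1_alt. unfold Rsqr.
  assert (0 <= (fst x - fst y)^2) by apply pow2_ge_0. nra.
Qed.

Lemma dist2_sym x y : dist2 x y = dist2 y x.
Proof. unfold dist2. f_equal. ring. Qed.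

Lemma cont_snd (nu : R -> R * R) c : abs_cont01 nu ->
  continuity (fun x => snd (nu (clamp x)) - c).
Proof.
  intros Hac x. unfold continuity_pt, continue_in, limit1_in, limit_in. intros eps Heps.
  destruct (Hac eps Heps) as [delta [Hd Hdel]].
  exists delta. split; auto. intros x' [_ Hx']. simpl in *. unfold R_dist in *.
  replace (snd (nu (clamp x')) - c - (snd (nu (clamp x)) - c)) with (snd (nu (clamp x')) - snd (nu (clamp x))) by ring.
  pose proof (clamp_lip x' x). pose proof (clamp_in x). pose proof (clamp_in x').
  destruct (Rle_dec (clamp x) (clamp x')).
  - specialize (Hdel 1%nat (fun _ => clamp x) (fun _ => clamp x')).
    simpl in Hdel. assert (dist2 (nu (clamp x')) (nu (clamp x)) < eps).
    { assert (H3: 0 + dist2 (nu (clamp x')) (nu (clamp x)) < eps); [|lra]. apply Hdel.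
      - intros; lra. - intros; lia. - rewrite Rabs_right in H by lra. lra. }
    pose proof (dist2_snd (nu (clamp x')) (nu (clamp x))). lra.
  - specialize (Hdel 1%nat (fun _ => clamp x') (fun _ => clamp x)).
    simpl in Hdel. assert (dist2 (nu (clamp x)) (nu (clamp x')) < eps).
    { assert (H3: 0 + dist2 (nu (clamp x)) (nu (clamp x')) < eps); [|lra]. apply Hdel.
      - intros; lra. - intros; lia. - rewrite Rabs_left in H by lra. lra. }
    pose proof (dist2_snd (nu (clamp x)) (nu (clamp x'))).
    rewrite Rabs_minus_sym. lra.
Qed.

Lemma times (G : R -> R) (N : nat) (y : nat -> R) :
  (forall c, continuity (fun x => G (clamp x) - c)) ->
  (forall k, G 0 <= y k) -> (forall k, y k <= y (S k)) -> G 1 = y N ->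
  exists T : nat -> R, T N = 1 /\ (forall k, (k <= N)%nat -> 0 <= T k <= 1 /\ G (T k) = y k) /\
    (forall k, (k < N)%nat -> T k <= T (S k)).
Proof.
  intros Hc H0 Hinc H1.
  assert (Hj : forall j, (j <= N)%nat -> exists T : nat -> R, T N = 1 /\
     (forall k, (N - j <= k <= N)%nat -> 0 <= T k <= 1 /\ G (T k) = y k) /\
     (forall k, (N - j <= k < N)%nat -> T k <= T (S k))).
  { induction j; intros Hj.
    - exists (fun _ => 1). split; auto. split.
      + intros k Hk. replace k with N by lia. split; [lra|auto].
      + intros; lia.
    - destruct IHj as [T [HT1 [HT2 HT3]]]; [lia|].
      set (k0 := (N - S j)%nat). set (u := T (S k0)).
      assert (Hu : 0 <= u <= 1 /\ G u = y (S k0)) by (apply HT2; unfold k0; lia).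
      destruct (IVT_cor (fun x => G (clamp x) - y k0) 0 u (Hc (y k0))) as [z [Hz1 Hz2]]; [lra| |].
      { rewrite !clamp_id by lra. pose proof (H0 k0). pose proof (Hinc k0).
        assert (G 0 - y k0 <= 0) by lra. assert (0 <= G u - y k0) by lra. nra. }
      rewrite clamp_id in Hz2 by lra.
      exists (fun k => if Nat.eqb k k0 then z else T k). split; [|split].
      + destruct (Nat.eqb_spec N k0); [unfold k0 in *; lia|auto].
      + intros k Hk. destruct (Nat.eqb_spec k k0).
        * split; [lra|]. subst k. lra.
        * apply HT2. unfold k0 in *. lia.
      + intros k Hk. destruct (Nat.eqb_spec k k0); destruct (Nat.eqb_spec (S k) k0); try lia.
        * subst k. fold u. lra.
        * apply HT3. unfold k0 in *. lia. }
  destruct (Hj N (le_n N)) as [T [HT1 [HT2 HT3]]]. exists T. split; [auto|split].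
  - intros k Hk. apply HT2. lia.
  - intros k Hk. apply HT3. lia.
Qed.

Lemma exp_le_mono x y : x <= y -> exp x <= exp y.
Proof. intros H. destruct (Rle_lt_or_eq_dec _ _ H). apply Rlt_le, exp_increasing; auto. subst; lra. Qed.

Theorem mainTheorem8 :
  forall (b : nat), Nat.Odd b -> (5 <= b)%nat ->
  let q := INR b / 2 in
  forall C : R, 0 < C ->
  exists K eps0 : R, 0 < K /\ 0 < eps0 /\
    forall eps zeta s : R,
      0 < eps -> eps < eps0 ->
      0 < zeta -> zeta <= C * Rpower eps (3 * q - 1) ->
      0 <= s ->
      forall nu : R -> R * R,
        abs_cont01 nu ->
        nu 0 = (0, - s) ->
        nu 1 = (Rpower eps q, eps) ->
        (forall t, 0 <= t <= 1 -> Dz b zeta (nu t)) ->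
        Rbar_le (Finite (LSR b s eps - K * Rpower zeta (1 - 1 / INR b)))
                (curve_length nu).
Proof.
  intros b _ H5 q C HC.
  destruct (Nat.le_exists_sub 2 b) as [e [Heb _]]; [lia|].
  assert (He : (3 <= e)%nat) by lia. subst b.
  assert (Hb : INR (e+2) = INR e + 2) by (rewrite plus_INR; simpl; lra).
  assert (He3 : 3 <= INR e) by (replace 3 with (INR 3) by (simpl; lra); apply le_INR; lia).
  assert (Hq : 0 < q) by (unfold q; lra).
  exists (1 + q * (8 * INR (e+2) + 1 + C)), 1. split; [nra|split; [lra|]].
  intros eps zeta s Heps Heps1 Hz Hzc Hs nu Hac Hnu0 Hnu1 HD.
  set (th := sqrt eps).
  assert (Hth : 0 < th) by (apply sqrt_lt_R0; lra).
  assert (Hth2 : th^2 = eps) by (unfold th; rewrite <- Rsqr_pow2; apply Rsqr_sqrt; lra).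
  assert (Hth1 : th < 1) by (unfold th; rewrite <- sqrt_1; apply sqrt_lt_1_alt; lra).
  set (rho := Rpower zeta (/ (2 * INR (e+2)))).
  assert (Hrho : 0 < rho) by (unfold rho, Rpower; apply exp_pos).
  assert (HbP : 0 < INR (e+2)) by lra.
  assert (HP : (rho^(e+2))^2 = zeta).
  { rewrite <- pow_mult. rewrite <- Rpower_pow by auto. unfold rho. rewrite Rpower_mult.
    rewrite mult_INR. replace (/ (2 * INR (e + 2)) * (INR (e + 2) * INR 2)) with 1 by (simpl; field; lra).
    apply Rpower_1; auto. }
  assert (HM : Rpower zeta (1 - 1 / INR (e+2)) = (rho^(e+2))^2 / rho^2).
  { rewrite HP. assert (Hr2 : rho^2 = Rpower zeta (1 / INR (e+2))).
    { rewrite <- Rpower_pow by auto. unfold rho. rewrite Rpower_mult. f_equal. simpl. field. lra. }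
    rewrite Hr2. assert (0 < Rpower zeta (1 / INR (e+2))) by (unfold Rpower; apply exp_pos).
    apply (Rmult_eq_reg_r (Rpower zeta (1 / INR (e+2)))); [|lra].
    rewrite <- Rpower_plus. replace (1 - 1 / INR (e + 2) + 1 / INR (e + 2)) with 1 by ring.
    rewrite Rpower_1 by auto. field. lra. }
  assert (Hqe : Rpower eps q = th^(e+2)).
  { unfold q. replace (INR (e+2) / 2) with (/2 * INR (e+2)) by field. rewrite <- Rpower_mult.
    rewrite Rpower_sqrt by auto. apply Rpower_pow. auto. }
  assert (Hzc' : zeta <= C * (th^2)^(e+2)).
  { rewrite Hth2. rewrite <- Rpower_pow by auto. eapply Rle_trans; [apply Hzc|].
    apply Rmult_le_compat_l; [lra|]. unfold Rpower. apply exp_le_mono.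
    assert (ln eps < 0) by (rewrite <- ln_1; apply ln_increasing; lra).
    unfold q. nra. }
  assert (Hrt : rho^2 <= (1 + C) * th^2).
  { destruct (Rle_dec (rho^2) ((1+C)*th^2)) as [|Hn]; auto. exfalso.
    assert (H1 : ((1+C)*th^2)^(e+2) <= (rho^2)^(e+2)) by (apply pow_incr; split; [nra|lra]).
    rewrite Rpow_mult_distr in H1.
    assert (H2 : (1+C)^1 <= (1+C)^(e+2)) by (apply Rle_pow; [lra|lia]).
    assert (H3 : 0 < (th^2)^(e+2)) by (apply pow_lt; nra).
    replace ((rho^2)^(e+2)) with ((rho^(e+2))^2) in H1 by (rewrite <- !pow_mult; f_equal; lia).
    rewrite HP in H1. simpl in H2. nra. }
  set (w := fun y => sqrt (1 + (INR (e+2)/2)^2 * y^e)).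
  set (M := (rho^(e+2))^2 / rho^2).
  assert (HMp : 0 < M) by (unfold M; apply Rdiv_lt_0_compat; [nra|nra]).
  set (A := 2 * th * Rabs (w (th^2) - w 0) + q * INR (e+2) * th^(e+1) * th^e + 1).
  assert (HA : 1 <= A).
  { unfold A. assert (0 <= Rabs (w (th ^ 2) - w 0)) by apply Rabs_pos.
    assert (0 <= th^(e+1)) by (apply pow_le; lra). assert (0 <= th^e) by (apply pow_le; lra).
    assert (0 <= q * INR (e+2) * th^(e+1) * th^e) by (repeat apply Rmult_le_pos; lra). nra. }
  destruct (archimed_cor1 (M / (th * A))) as [N [HN1 HN2]].
  { apply Rdiv_lt_0_compat; nra. }
  assert (HNp : 0 < INR N) by (apply lt_0_INR; lia).
  set (tau := th / INR N).
  assert (Htau : tau * A <= M).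
  { unfold tau. unfold Rdiv at 1. apply (Rmult_le_reg_r (/ (th * A))).
    { apply Rinv_0_lt_compat; nra. }
    replace (th * / INR N * A * / (th * A)) with (/ INR N) by (field; lra). unfold Rdiv in HN1. lra. }
  set (y := fun k => (INR k * tau)^2).
  destruct (times (fun t => snd (nu t)) N y) as [T [HT1 [HT2 HT3]]].
  { intros c. apply cont_snd. auto. }
  { intros k. simpl. rewrite Hnu0. simpl. unfold y. assert (0 <= (INR k * tau)^2) by apply pow2_ge_0. lra. }
  { intros k. unfold y. rewrite S_INR. assert (0 <= INR k) by apply pos_INR. assert (0 < tau) by (unfold tau; apply Rdiv_lt_0_compat; lra).
    apply pow_incr. split; nra. }
  { simpl. rewrite Hnu1. simpl. unfold y, tau. rewrite <- Hth2. f_equal. field. lra. }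
  set (a := fun k => fst (nu (T k))).
  assert (Core := core e N th rho a ltac:(lia) ltac:(lia) Hth Hrho).
  assert (Hy0 : forall k, 0 <= y k) by (intros; apply pow2_ge_0).
  specialize (Core ltac:(
    intros k Hk; destruct (HT2 k Hk) as [HTk Hsk]; destruct (HD (T k) HTk) as [Hf HPt];
    unfold a; split; [exact Hf|];
    unfold Pt in HPt; destruct (Rle_dec 0 (snd (nu (T k)))) as [_|Hn]; [|exfalso; simpl in Hsk; rewrite Hsk in Hn; apply Hn, Hy0];
    simpl in Hsk; rewrite Hsk in HPt; unfold y in HPt; fold tau;
    replace (((INR k * tau)^2)^(e+2)) with (((INR k * tau)^(e+2))^2) in HPt by (rewrite <- !pow_mult; f_equal; lia);
    unfold Sx; rewrite HP; rewrite <- (sqrt_pow2 (fst (nu (T k)))) by exact Hf;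
    apply sqrt_le_1_alt; lra)).
  specialize (Core ltac:(unfold a; rewrite HT1, Hnu1; simpl; exact Hqe)).
  set (P' := fun i => match i with O => 0 | S k => T k end).
  set (L := sumn_R (S N) (fun i => dist2 (nu (P' (S i))) (nu (P' i)))).
  assert (HL : inscribed_length nu L).
  { exists (S N), P'. split; [reflexivity|]. split; [simpl; exact HT1|]. split; [|reflexivity].
    intros i Hi. destruct i as [|k]; simpl.
    - apply (HT2 O). lia.
    - apply HT3. lia. }
  assert (HL2 : L = dist2 (nu (T O)) (nu 0) + sumn_R N (fun k => sqrt ((a (S k) - a k)^2 + ((INR (S k) * (th/INR N))^2 - (INR k * (th/INR N))^2)^2))).
  { unfold L. rewrite sumn_shift. f_equal. apply sumn_ext. intros k Hk. simpl.
    unfold dist2. destruct (HT2 (S k) ltac:(lia)) as [_ H1']. destruct (HT2 k ltac:(lia)) as [_ H2'].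
    simpl in H1', H2'. rewrite H1', H2'. unfold a, y. fold tau. reflexivity. }
  assert (Hs0 : s <= dist2 (nu (T O)) (nu 0)).
  { eapply Rle_trans; [|apply dist2_snd]. destruct (HT2 O ltac:(lia)) as [_ H']. simpl in H'. rewrite H', Hnu0.
    simpl. unfold y. replace ((INR 0 * tau)^2 - - s) with s by (simpl; ring). rewrite Rabs_right; lra. }
  assert (Hfin : LSR (e+2) s eps - (1 + q * (8 * INR (e+2) + 1 + C)) * Rpower zeta (1 - 1 / INR (e+2)) <= L).
  { unfold LSR. cbv zeta. replace (e+2-2)%nat with e by lia. fold w.
    rewrite <- Hth2. rewrite HM. fold M. rewrite HL2. fold w in Core. fold tau in Core.
    replace ((rho ^ (e + 2)) ^ 2 / rho ^ 2) with M in Core by reflexivity.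
    assert (Hab : w (th^2) - w 0 <= Rabs (w (th^2) - w 0)) by apply Rle_abs.
    assert (Htp : 0 < tau) by (unfold tau; apply Rdiv_lt_0_compat; lra).
    assert (T13 : 2 * th * tau * (w (th ^ 2) - w (0)) + INR (e+2)/2 * INR (e+2) * th^(e+1) * tau * th^e <= M).
    { assert (2 * th * tau * (w (th ^ 2) - w 0) <= 2 * th * tau * Rabs (w (th ^ 2) - w 0)) by (apply Rmult_le_compat_l; nra).
      unfold A, q in Htau. nra. }
    assert (T4 : INR (e+2)/2 * th^e * ((rho^(e+2))^2 / th^(e+2)) <= INR (e+2)/2 * ((1 + C) * M)).
    { rewrite Rmult_assoc. apply Rmult_le_compat_l; [lra|]. rewrite (pow_add th e 2). unfold M.
      assert (0 < th^e) by (apply pow_lt; lra). assert (0 < th^2) by nra. assert (0 < rho^2) by nra.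
      replace (th ^ e * ((rho ^ (e + 2)) ^ 2 / (th ^ e * th ^ 2))) with ((rho ^ (e + 2)) ^ 2 / th^2) by (field; lra).
      assert (0 < (rho^(e+2))^2) by (rewrite HP; lra).
      apply (Rmult_le_reg_r (th^2 * rho^2)); [nra|].
      replace ((rho ^ (e + 2)) ^ 2 / th ^ 2 * (th ^ 2 * rho ^ 2)) with ((rho ^ (e + 2)) ^ 2 * rho^2) by (field; lra).
      replace ((1 + C) * ((rho ^ (e + 2)) ^ 2 / rho ^ 2) * (th ^ 2 * rho ^ 2)) with ((rho ^ (e + 2)) ^ 2 * ((1+C) * th^2)) by (field; lra).
      apply Rmult_le_compat_l; lra. }
    change (sqrt (1 + (INR (e + 2) / 2) ^ 2 * (th ^ 2) ^ e)) with (w (th^2)) in Core.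
    change (sqrt (1 + (INR (e+2)/2)^2 * 0^e)) with (w 0) in Core.
    assert (H8 : 8*INR(e+2)*(rho^(e+2))^2/rho^2 = 8*INR(e+2)*M) by (unfold M; field; nra).
    rewrite H8 in Core. fold tau.
    assert (Hk : (1 + INR (e+2)/2*(8*INR (e+2)+1+C))*M = M + INR (e+2)/2*(8*INR (e+2)*M) + INR (e+2)/2*((1+C)*M)) by ring.
    unfold q in *. rewrite Hk. lra. }
  eapply Rbar_le_trans; [|apply (proj1 (Lub_Rbar_correct (inscribed_length nu))); exact HL].
  simpl. exact Hfin.
Qed.
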